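(* Let $B=(V,E)$ be an unordered strongly $k$-simple Bratteli diagram such that for every $n\ge1$ each vertex of $V^{n+1}_o$ is joined by an edge to every vertex of $V^n$. Suppose there are elements $d_1,\dots,d_k\in\mathrm{K}_{I_B}$, each given at every level $n\ge1$ by a vector $d_i^{(n)}=(d_i(v))_{v\in V^n_o}\in\mathbb Z^{V^n_o}$ compatible with the connecting maps, such that: (a) for integers $c_1,\dots,c_k$, $c_1d_1+\dots+c_kd_k=0$ if and only if $c_1=c_2=\dots=c_k$; (b) for every level $n$ and every $v\in V^n_o$, $d_i(v)\in\{0,1,-1\}$ for $1\le i\le k$; (c) for every $v\in V^n_o$, the set $\{i: d_i(v)\ne0\}$ has either $0$ or $2$ elements, and if it equals $\{i_1,i_2\}$ then $(d_{i_1}(v),d_{i_2}(v))$ is $(+1,-1)$ or $(-1,+1)$. Then there is an order $>$ on $B$ such that $(V,E,>)$ is a (strongly) $k$-simple ordered Bratteli diagram.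
   Context: Bratteli diagram: vertex sets $V^0=\{v_0\},V^1,\dots$, edge sets $E^n$ with $s(E^n)=V^n$, $r(E^n)=V^{n+1}$; $w$ at level $m$ is connected to $v$ at level $n<m$ if a finite path goes from $v$ to $w$. $k$-simple: for each $n\ge1$ pairwise disjoint $V^n_1,\dots,V^n_k\subseteq V^n$ with (i) $s(r^{-1}(v))\subseteq V^n_i$ for $v\in V^{n+1}_i$; (ii) for all $i,n$ some $m>n$ with every vertex of $V^m_i$ connected to every vertex of $V^n_i$. $V^n_o:=V^n\setminus\bigcup_iV^n_i$. Strongly $k$-simple: additionally, for every $n$ there is $m>n$ such that each vertex of $V^m_o$ connected to some vertex of $V^n_o$ is connected to all of them. $\mathrm{K}_{I_B}=\varinjlim(\mathbb Z^{V^n_o},\phi_n)$ where $\phi_n$ has $(w,v)$-entry equal to the number of edges from $v\in V^n_o$ to $w\in V^{n+1}_o$; compatibility means $\phi_n(d_i^{(n)})=d_i^{(n+1)}$. An order is a linear order on each $r^{-1}(v)$, extended lexicographically to finite paths with common range; $e+1$ is the successor; $E_{\max}$ the maximal edges; $X_{\max},X_{\min}$ the infinite paths of maximal/minimal edges. $(V,E,>)$ is $k$-simple ordered if: (1) $(V,E)$ is $k$-simple; (2) there are infinite paths $z_{i,\max},z_{i,\min}$ with level-$n$ vertices in $V^n_i$, $X_{\max}=\{z_{1,\max},\dots,z_{k,\max}\}$, $X_{\min}=\{z_{1,\min},\dots,z_{k,\min}\}$; there is $L$ such that for $n\ge L$, $v\in V^n_o$, the maximal (resp. minimal) finite path from $v_0$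 to $v$ passes at level 1 through $V^1_i$, written $m_+(v)=i$ (resp. $m_-(v)=i$); (3) for $v\in V^n_o$: (a) each edge $e$ with $s(e)=v$ satisfies $m_-(s(e+1))=m_+(v)$ (for maximal $e$, $s(e+1)$ means the level-$n$ source of the successor of a non-maximal finite path starting with $e$); (b) if $e\notin E_{\max}$, $r(e)=v$, $s(e)\in V^{n-1}_i$, $n\ge3$, then $m_-(s(e+1))=i$. *)

(* Defs.v *)
From HB Require Import structures.
From mathcomp Require Import all_boot all_order all_algebra.
Import GRing.Theory Num.Theory.

Set Implicit Arguments.
Unset Strict Implicit.
Unset Printing Implicit Defensive.

Record bratteli := Bratteli {
  V : nat -> finType;
  E : nat -> finType;
  src : forall n, E n -> V n;
  rng : forall n, E n -> V n.+1;
  V0_single : #|V 0| = 1;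
  rng_surj : forall n (w : V n.+1), exists e : E n, rng e = w;
  src_surj : forall n (v : V n), exists e : E n, src e = v }.

Arguments src {b n}.
Arguments rng {b n}.

Section Defs.
Variable B : bratteli.

Inductive reach : forall n, V B n -> forall m, V B m -> Prop :=
| reach_refl n (v : V B n) : reach v v
| reach_step n (v : V B n) m (e : E B m) : reach v (src e) -> reach v (rng e).

Variable k : nat.
Variable P : forall n, 'I_k -> {set V B n}.   (* the sets V^n_i, used for n >= 1 *)

Definition Vo n : {set V B n} := ~: \bigcup_(i < k) P n i.

Definition ksimple : Prop :=
  [/\ (forall n (i j : 'I_k), 0 < n -> i != j -> [disjoint P n i & P n j]),
      (forall n i, 0 < n -> P n i != set0),
      (forall n i (e : E B n), 0 < n -> rng e \in P n.+1 i -> src e \in P n i)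
    & (forall n i, 0 < n -> exists m, n < m /\
          forall (w : V B m) (v : V B n), w \in P m i -> v \in P n i -> reach v w)].

Definition strongly_ksimple : Prop :=
  ksimple /\
  forall n, 0 < n -> exists m, n < m /\
    forall w : V B m, w \in Vo m ->
      (exists v : V B n, v \in Vo n /\ reach v w) ->
      forall v : V B n, v \in Vo n -> reach v w.

(* The group K_{I_B} = lim (Z^{V^n_o}, phi_n).  A family d n : V n -> int
   (only values on V^n_o matter) is a thread if phi_n (d n) = d (n+1). *)
Definition phi_thread (d : forall n, V B n -> int) : Prop :=
  forall n (w : V B n.+1), 0 < n -> w \in Vo n.+1 ->
    d n.+1 w = (\sum_(v in Vo n)
                 (#|[set e : E B n | (src e == v) && (rng e == w)]|%:Z * d n v))%R.

(* A thread represents 0 in the direct limit iff some representative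
   vanishes (its images at all higher levels being the later entries). *)
Definition lim_zero (x : forall n, V B n -> int) : Prop :=
  exists n, 0 < n /\ forall v : V B n, v \in Vo n -> x n v = 0%R.

Definition is_order (lt : forall n, rel (E B n)) : Prop :=
  forall n (e f g : E B n),
    [/\ lt n e f -> rng e = rng f,
        ~~ lt n e e,
        (lt n e f -> lt n f g -> lt n e g)
      & (rng e = rng f -> [|| e == f, lt n e f | lt n f e])].

Variable lt : forall n, rel (E B n).

Definition is_max n (e : E B n) : Prop := forall f : E B n, rng f = rng e -> f = e \/ lt f e.
Definition is_min n (e : E B n) : Prop := forall f : E B n, rng f = rng e -> f = e \/ lt e f.
Arguments is_max [n].
Arguments is_min [n].

Definition is_succ n (e f : E B n) : Prop :=
  [/\ rng f = rng e, lt e f &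
      forall g : E B n, rng g = rng e -> lt e g -> g = f \/ lt f g].
Arguments is_succ [n].

Inductive down (ext : forall n, E B n -> Prop) : forall n, V B n -> forall m, V B m -> Prop :=
| down_refl n (v : V B n) : down ext v v
| down_step n (e : E B n) m (u : V B m) : ext n e -> down ext (src e) u -> down ext (rng e) u.

(* m_+(v) = i : the maximal path from v0 to v passes at level 1 through V^1_i *)
Definition mplus n (v : V B n) (i : 'I_k) : Prop :=
  exists a : V B 1, down (@is_max) v a /\ a \in P 1 i.
Definition mminus n (v : V B n) (i : 'I_k) : Prop :=
  exists a : V B 1, down (@is_min) v a /\ a \in P 1 i.

Definition ipath (x : forall n, E B n) : Prop := forall n, rng (x n) = src (x n.+1).

Definition ksimple_ordered : Prop :=
  [/\ ksimple,
      (exists zmax zmin : 'I_k -> forall n, E B n,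
        [/\ (forall i, ipath (zmax i) /\ ipath (zmin i)),
            (forall i n, 0 < n -> src (zmax i n) \in P n i /\ src (zmin i n) \in P n i),
            (forall x, ipath x -> ((forall n, is_max (x n)) <-> exists i, forall n, x n = zmax i n))
          & (forall x, ipath x -> ((forall n, is_min (x n)) <-> exists i, forall n, x n = zmin i n))])
    & (exists L,
        [/\ (forall n (v : V B n), L <= n -> 0 < n -> v \in Vo n ->
                (exists i, mplus v i) /\ (exists i, mminus v i)),
            (* (3a): e with s(e) = v; e_n..e_{j-1} maximal (from v up to u),
               f = e_j non-maximal with s f = u, f' = f + 1, and w the level-n
               vertex of the successor path (min path down from s f'). *)
            (forall n (v : V B n), L <= n -> 0 < n -> v \in Vo n ->
              forall j (u : V B j) (f f' : E B j) (w : V B n),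
                down (@is_max) u v -> src f = u -> ~ is_max f -> is_succ f f' ->
                down (@is_min) (src f') w ->
                forall i, mplus v i -> mminus w i)
          &
            (forall n (v : V B n.+1) (e f : E B n) (i : 'I_k),
                L <= n.+1 -> 2 <= n -> v \in Vo n.+1 -> rng e = v -> ~ is_max e ->
                src e \in P n i -> is_succ e f -> mminus (src f) i)])].

End Defs.

(* Main.v *)
Require Import Defs.
From HB Require Import structures.
From mathcomp Require Import all_boot all_order all_algebra.
From mathcomp Require Import zify ring lra.
From Stdlib Require Import IndefiniteDescription Eqdep_dec PeanoNat Classical.
Import GRing.Theory Num.Theory.

Set Implicit Arguments.
Unset Strict Implicit.
Unset Printing Implicit Defensive.
Section Euler.
Variables (T : eqType) (k : nat) (st en : T -> 'I_k) (i0 : 'I_k).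

Definition lnk : rel T := fun x y => en x == st y.
Definition hs (s : seq T) := if s is x :: _ then st x else i0.
Definition es (s : seq T) := if s is x :: s' then en (last x s') else i0.
Definition tr (s : seq T) := (s != [::]) && sorted lnk s.
Definition bz (b : bool) : int := (b : nat)%:Z.
Definition netc (s : seq T) (i : 'I_k) : int :=
  ((count (fun t => en t == i) s)%:Z - (count (fun t => st t == i) s)%:Z)%R.

Lemma netc_cons x s i : netc (x :: s) i = (bz (en x == i) - bz (st x == i) + netc s i)%R.
Proof. rewrite /netc /bz /= !PoszD; ring. Qed.

Lemma netc_sum s i : netc s i = (\sum_(t <- s) (bz (en t == i) - bz (st t == i)))%R.
Proof.
elim: s => [|x s IH]; first by rewrite big_nil /netc /= subrr.
by rewrite netc_cons IH big_cons.
Qed.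

Lemma netc_cat s1 s2 i : netc (s1 ++ s2) i = (netc s1 i + netc s2 i)%R.
Proof. rewrite /netc !count_cat !PoszD; ring. Qed.

Lemma netc_perm s1 s2 i : perm_eq s1 s2 -> netc s1 i = netc s2 i.
Proof. by move=> /permP H; rewrite /netc !H. Qed.

Lemma net_tr s i : tr s -> netc s i = (bz (i == es s) - bz (i == hs s))%R.
Proof.
case: s => [|x s] //= /andP[_]; elim: s x => [|y s IH] x /=.
  by move=> _; rewrite netc_cons /netc /= subrr addr0 ![i == _]eq_sym.
case/andP=> /eqP Hxy Hp; rewrite netc_cons (IH y Hp) /= Hxy (eq_sym (st y)) (eq_sym (st x)).
ring.
Qed.

Lemma tr_cat s1 s2 : tr s1 -> tr s2 -> es s1 = hs s2 ->
  [/\ tr (s1 ++ s2), hs (s1 ++ s2) = hs s1 & es (s1 ++ s2) = es s2].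
Proof.
case: s1 => [|x s1] //; case: s2 => [|y s2] // /andP[_ H1] /andP[_ H2] /= E.
rewrite /= in H1 H2.
split => //; last by rewrite last_cat.
by rewrite /tr /= cat_path H1 /= /lnk E eqxx.
Qed.

Lemma tr_catE s1 s2 : s1 != [::] -> s2 != [::] -> tr (s1 ++ s2) ->
  [/\ tr s1, tr s2 & es s1 = hs s2].
Proof.
case: s1 => [|x s1] //; case: s2 => [|y s2] // _ _ /andP[_] /=.
rewrite cat_path => /andP[P1 /= /andP[/eqP E P2]].
by split; rewrite /tr /= ?P1 ?P2.
Qed.

Definition labs (s : seq T) (l : 'I_k) := (l \in map st s) || (l == es s).

Lemma en_labs s t : sorted lnk s -> t \in s -> labs s (en t).
Proof.
rewrite /labs; elim: s => [|x s IH] //= Hs; rewrite inE => /orP[/eqP ->|ts].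
  case: s Hs {IH} => [|y s] /=; first by move=> _; rewrite eqxx orbT.
  by case/andP=> /eqP -> _; rewrite !inE eqxx !orbT.
have Hs' : sorted lnk s by case: s Hs {IH ts} => //= y s /andP[].
case/orP: (IH Hs' ts) => [H|/eqP ->]; first by rewrite inE H orbT.
by case: s ts {IH Hs Hs'} => //= y s _; rewrite eqxx !orbT.
Qed.

Lemma rot_ex s l : tr s -> es s = hs s -> l \in map st s ->
  exists r, [/\ tr r, perm_eq r s, hs r = l & es r = l].
Proof.
move=> Hs Hc /mapP[t ts El]; case/splitPr: ts Hs Hc => X Y.
case: X => [|x X] Hs Hc.
  by exists (t :: Y); split => //; rewrite ?Hc /= El.
have [H1 H2 E] := tr_catE (isT : x :: X != [::]) (isT : t :: Y != [::]) Hs.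
have E2 : es (t :: Y) = hs (x :: X).
  by move: Hc; rewrite /es /= last_cat.
have [H3 H4 H5] := tr_cat H2 H1 E2.
exists ((t :: Y) ++ x :: X); split.
- done.
- by rewrite perm_catC.
- by rewrite /= El.
- by transitivity (es (x :: X)); [exact: H5 | rewrite E /= El].
Qed.

Lemma splice_ex s1 s2 l : tr s1 -> es s1 = hs s1 -> l \in map st s1 -> tr s2 ->
  labs s2 l -> exists s3, tr s3 /\ perm_eq s3 (s1 ++ s2).
Proof.
move=> H1 Hc Hl H2; have [r [Hr Pr Hhr Her]] := rot_ex H1 Hc Hl.
case/orP => [/mapP[t ts El]|/eqP El].
  move: H2; case/splitPr: ts => X Y; case: X => [|x X] H2.
    have [H3 _ _] := tr_cat Hr H2 (etrans Her El).
    by exists (r ++ t :: Y); split => //; rewrite perm_cat2r.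
  have [H4 H5 E] := tr_catE (isT : x :: X != [::]) (isT : t :: Y != [::]) H2.
  have [H3 H3h _] := tr_cat Hr H5 (etrans Her El).
  have [H6 _ _] := tr_cat H4 H3 (etrans E (etrans (esym El) (esym (etrans H3h Hhr)))).
  exists ((x :: X) ++ r ++ t :: Y); split => //.
  by rewrite perm_catCA perm_cat2r.
have [H3 _ _] := tr_cat H2 Hr (etrans (esym El) (esym Hhr)).
by exists (s2 ++ r); split => //; rewrite perm_catC perm_cat2r.
Qed.

Lemma bz_01 x : (bz x = 0 \/ bz x = 1)%R.
Proof. by case: x; [right|left]. Qed.

Variables (S : seq T) (a b : 'I_k).
Hypothesis Hbal : forall i, netc S i = (bz (i == a) - bz (i == b))%R.
Hypothesis Hcon : forall A : {set 'I_k}, A != set0 -> A != setT ->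
  has (fun t => (st t \in A) != (en t \in A)) S.

Definition pairf (F : seq (seq T)) T1 T2 := exists R, perm_eq F [:: T1, T2 & R].

Lemma pair_rem F T1 T2 : T1 \in F -> T2 \in rem T1 F -> pairf F T1 T2.
Proof.
move=> H1 H2; exists (rem T2 (rem T1 F)).
by apply: (perm_trans (perm_to_rem H1)); rewrite perm_cons perm_to_rem.
Qed.

Lemma pair_sym F T1 T2 : pairf F T1 T2 -> pairf F T2 T1.
Proof.
case=> R H; exists R; apply: (perm_trans H).
by rewrite -[[:: T1, T2 & R]]/([:: T1] ++ [:: T2] ++ R) perm_catCA.
Qed.

Lemma netc_flatten F i : netc (flatten F) i = (\sum_(s <- F) netc s i)%R.
Proof.
elim: F => [|s F IH]; first by rewrite big_nil /netc /= subrr.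
by rewrite /= netc_cat IH big_cons.
Qed.

Definition goodres (s : seq T) :=
  [/\ perm_eq s S, sorted lnk s & (if s is t :: s' then st t = b /\ en (last t s') = a else a = b)].

Lemma fam n : forall F, size F <= n -> all tr F -> perm_eq (flatten F) S ->
  exists s, goodres s.
Proof.
elim: n => [|n IHn] F.
  rewrite leqn0 => /nilP -> _ /= HS; exists [::]; split => //.
  have := Hbal a; rewrite -(netc_perm _ HS) /netc /= eqxx.
  by case: (a == b) / eqP.
move=> Hsz Htr HS.
have Fnet : forall i, (\sum_(s <- F) (bz (i == es s) - bz (i == hs s)) = bz (i == a) - bz (i == b))%R.
  move=> i; rewrite -Hbal -(netc_perm _ HS) netc_flatten big_seq [RHS]big_seq.
  by apply: eq_bigr => s sF; rewrite net_tr //; move/allP: Htr; apply.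
case: F Hsz Htr HS Fnet => [|T0 F0] Hsz Htr HS Fnet.
  by apply: (IHn [::]).
case: F0 Hsz Htr HS Fnet => [|T1 F1] Hsz Htr HS Fnet.
  rewrite /= andbT in Htr; rewrite /= cats0 in HS.
  have Hn : forall i, (bz (i == es T0) - bz (i == hs T0) = bz (i == a) - bz (i == b))%R.
    by move=> i; rewrite -Fnet big_cons big_nil addr0.
  have T0n : T0 != [::] by case/andP: Htr.
  have T0s : sorted lnk T0 by case/andP: Htr.
  have fin : hs T0 = b -> es T0 = a -> exists s, goodres s.
    move=> Eh Ee; exists T0; split => //; move: T0n Eh Ee; case: (T0) => //.
  case: (eqVneq a b) => [Eab|Nab].
    have Ec : es T0 = hs T0.
      by have := Hn (es T0); rewrite -Eab eqxx subrr; case: eqP => // _ /eqP.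
    have : a \in map st T0.
      case: (eqVneq (hs T0) a) => [<-|Nh].
        by move: T0n; case: (T0) => //= x s _; rewrite inE eqxx.
      have A1 : [set a] != set0 by apply/set0Pn; exists a; rewrite inE.
      have A2 : [set a] != setT.
        apply/negP => /eqP E; move: Nh; have : hs T0 \in [set a] by rewrite E inE.
        by rewrite inE => ->.
      case/hasP: (Hcon A1 A2) => t; rewrite -(perm_mem HS) => tT; rewrite !inE.
      case: (eqVneq (st t) a) => [<- _|_ H]; first by apply: map_f.
      have Et : en t = a by move: H; case: (en t =P a).
      have := en_labs T0s tT; rewrite Et /labs => /orP[//|/eqP ->]; rewrite Ec.
      by move: T0n; case: (T0) => //= x s _; rewrite inE eqxx.
    move=> Ha; have [r [Hr Pr Hhr Her]] := rot_ex Htr Ec Ha.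
    exists r; split; first by apply: perm_trans HS.
      by case/andP: Hr.
    by move: Hr Hhr Her; case: (r) => //= x s _ -> ->; split.
  apply: fin.
    have := Hn b; rewrite eqxx (eq_sym b a) (negbTE Nab) /bz /= sub0r.
    by case: eqP => //; case: eqP => // _ _ /eqP; rewrite -addr_eq0.
  have := Hn a; rewrite eqxx (negbTE Nab) /bz /= subr0.
  by case: eqP => // _; case: eqP.
set F := T0 :: T1 :: F1 in Hsz Htr HS Fnet *.
have trF : forall s, s \in F -> tr s by apply/allP.
case: (classic (exists T1 T2, pairf F T1 T2 /\ (es T1 = hs T2 \/
   (es T1 = hs T1 /\ exists l, l \in map st T1 /\ labs T2 l)))).
  case=> U1 [U2 [[R HR] Hm]].
  have U1F : U1 \in F by rewrite (perm_mem HR) inE eqxx.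
  have U2F : U2 \in F by rewrite (perm_mem HR) !inE eqxx orbT.
  have RF : forall s, s \in R -> s \in F by move=> s sR; rewrite (perm_mem HR) !inE sR !orbT.
  have szR : (size R).+1 <= n by move: Hsz; rewrite (perm_size HR).
  have allR : all tr R by apply/allP => s /RF; apply: trF.
  have [U3 [HU3 PU3]] : exists U3, tr U3 /\ perm_eq U3 (U1 ++ U2).
    case: Hm => [E|[Ec [l [Hl Hl2]]]].
      by exists (U1 ++ U2); have [? _ _] := tr_cat (trF _ U1F) (trF _ U2F) E.
    exact: splice_ex (trF _ U1F) Ec Hl (trF _ U2F) Hl2.
  apply: (IHn (U3 :: R)) => //=; first by rewrite HU3.
  have HR' : perm_eq (flatten [:: U1, U2 & R]) (flatten F) by apply: perm_flatten; rewrite perm_sym.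
  apply: (perm_trans _ HS); apply: (perm_trans _ HR'); by rewrite /= catA perm_cat2r.
move=> Hno.
have H1 : forall U1 U2, pairf F U1 U2 -> es U1 != hs U2.
  by move=> U1 U2 P; apply/eqP => E; apply: Hno; exists U1, U2; split => //; left.
have H2 : forall U1 U2, pairf F U1 U2 -> es U1 = hs U1 -> forall l, l \in map st U1 -> ~~ labs U2 l.
  move=> U1 U2 P Ec l Hl; apply/negP => Hl2; apply: Hno; exists U1, U2; split => //.
  by right; split => //; exists l.
have hsin : forall U, tr U -> hs U \in map st U.
  by case=> [|x U] // _; rewrite /= inE eqxx.
have Step1 : forall U, U \in F -> es U != hs U -> [/\ es U = a, hs U = b & a != b].
  move=> U UF No.
  have Pm := perm_to_rem UF.
  have Q : (1 <= bz (es U == a) - bz (es U == b))%R.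
    rewrite -Fnet (perm_big _ Pm) big_cons eqxx (negbTE No) /bz /= subr0.
    rewrite -[X in (X <= _)%R]addr0 lerD2l big_seq sumr_ge0 // => s sR.
    have /H1 : pairf F U s by apply: pair_rem.
    by move/negbTE; rewrite eq_sym => ->; rewrite subr0.
  have Q2 : (bz (hs U == a) - bz (hs U == b) <= -1)%R.
    rewrite -Fnet (perm_big _ Pm) big_cons eqxx eq_sym (negbTE No) /bz /= sub0r.
    rewrite -[X in (_ <= X)%R]addr0 lerD2l big_seq sumr_le0 // => s sR.
    have /H1 : pairf F s U by apply/pair_sym/pair_rem.
    by move/negbTE; rewrite eq_sym => ->; rewrite sub0r oppr_le0.
  move: Q Q2; rewrite /bz.
  case: (eqVneq (es U) a) => [Ea|]; case: (eqVneq (es U) b) => //= Eb;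
  case: (eqVneq (hs U) a) => //= Ha; case: (eqVneq (hs U) b) => //= Hb _ _.
  by split => //; rewrite -Ea.
have Step2 : forall U1 U2, pairf F U1 U2 -> es U1 != hs U1 -> es U2 != hs U2 -> False.
  move=> U1 U2 [R HR] N1 N2.
  have U1F : U1 \in F by rewrite (perm_mem HR) inE eqxx.
  have U2F : U2 \in F by rewrite (perm_mem HR) !inE eqxx orbT.
  have [E1 F1' Nab] := Step1 _ U1F N1; have [E2 F2' _] := Step1 _ U2F N2.
  have := Fnet a; rewrite (perm_big _ HR) !big_cons E1 E2 F1' F2' eqxx (negbTE Nab) /bz /=.
  move=> Eq; suff : (2 <= 1 :> int)%R by [].
  rewrite -[X in (_ <= X)%R]Eq subr0 -[X in (X <= _)%R]addr0 addrA lerD2l big_seq sumr_ge0 // => s sR.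
  have sF : s \in F by rewrite (perm_mem HR) !inE sR !orbT.
  case: (eqVneq (es s) (hs s)) => [->|Ns]; first by rewrite subrr.
  have [-> -> _] := Step1 _ sF Ns; rewrite eqxx (negbTE Nab) /=.
  done.
have claim : forall U, U \in T1 :: F1 -> forall l, labs T0 l -> labs U l -> False.
  move=> U UF l L0 L1.
  have P : pairf F T0 U.
    by exists (rem U (T1 :: F1)); rewrite /F perm_cons perm_to_rem.
  have memst : forall V, V \in F -> es V = hs V -> labs V l -> l \in map st V.
    move=> V VF Ec; rewrite /labs => /orP[//|/eqP ->]; rewrite Ec; apply: hsin; exact: trF.
  case: (eqVneq (es T0) (hs T0)) => [Ec|N0].
    by move/negP: (H2 _ _ P Ec _ (memst _ (mem_head _ _) Ec L0)); apply.
  case: (eqVneq (es U) (hs U)) => [Ec|N1].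
    have UF' : U \in F by rewrite inE UF orbT.
    by move/negP: (H2 _ _ (pair_sym P) Ec _ (memst _ UF' Ec L1)); apply.
  exact: (Step2 _ _ P N0 N1).
pose A := [set l | labs T0 l].
have A1 : A != set0.
  apply/set0Pn; exists (hs T0); rewrite inE /labs hsin //; apply: trF; exact: mem_head.
have A2 : A != setT.
  apply/negP => /eqP EA.
  have : hs T1 \in A by rewrite EA inE.
  rewrite inE => L0; apply: (claim T1 (mem_head _ _) _ L0).
  by rewrite /labs hsin //; apply: trF; rewrite !inE eqxx orbT.
case/hasP: (Hcon A1 A2) => t; rewrite -(perm_mem HS) => /flattenP[U].
rewrite inE => /orP[/eqP ->|UF] tT.
  have T0s : sorted lnk T0 by case/andP: (trF _ (mem_head _ _)).
  by rewrite !inE (en_labs T0s tT) /labs (map_f st tT).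
have UF' : U \in F by rewrite inE UF orbT.
have Us : sorted lnk U by case/andP: (trF U UF').
have L1 : labs U (st t) by rewrite /labs (map_f st tT).
have L2 : labs U (en t) := en_labs Us tT.
rewrite !inE.
case: (boolP (labs T0 (st t))) => [L|_]; first by case: (claim _ UF _ L L1).
case: (boolP (labs T0 (en t))) => [L|_] //; by case: (claim _ UF _ L L2).
Qed.

Lemma euler : exists s, goodres s.
Proof.
apply: (fam (n := size S) (F := [seq [:: t] | t <- S])).
- by rewrite size_map.
- by apply/allP => s /mapP[t _ ->].
- by rewrite flatten_seq1.
Qed.

End Euler.

Section Main.
Variable B : bratteli.
Variable k : nat.
Variable P : forall n, 'I_k -> {set V B n}.
Unset Implicit Arguments.
Variable d : 'I_k -> forall n, V B n -> int.
Set Implicit Arguments.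
Hypothesis hk : 0 < k.
Hypothesis hS : strongly_ksimple P.
Hypothesis hfull : forall n (w : V B n.+1) (v : V B n), 0 < n -> w \in Vo P n.+1 ->
      exists e : E B n, src e = v /\ rng e = w.
Hypothesis hthr : forall i, phi_thread P (d i).
Hypothesis hA : forall c : 'I_k -> int,
      lim_zero P (fun n v => \sum_(i < k) c i * d i n v)%R <-> (forall i j, c i = c j).
Hypothesis hb : forall n (v : V B n) i, 0 < n -> v \in Vo P n -> d i n v \in [:: 0; 1; -1]%R.
Hypothesis hc : forall n (v : V B n), 0 < n -> v \in Vo P n ->
      #|[set i | d i n v != 0%R]| \in [:: 0; 2] /\
      forall i1 i2, i1 != i2 -> [set i | d i n v != 0%R] = [set i1; i2] ->
        (d i1 n v, d i2 n v) = (1, -1)%R \/ (d i1 n v, d i2 n v) = (-1, 1)%R.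

Definition i0 : 'I_k := Ordinal hk.

Lemma hdisj n i j (v : V B n) : 0 < n -> v \in P n i -> v \in P n j -> i = j.
Proof.
case: hS => [[H1 _ _ _] _] Hn Hi Hj; apply/eqP; apply/negP => /negP Nij.
by have := disjointFr (H1 n i j Hn Nij) Hi; rewrite Hj.
Qed.

Lemma hne n i : 0 < n -> exists v : V B n, v \in P n i.
Proof. by case: hS => [[_ H2 _ _] _] Hn; apply/set0Pn; apply: H2. Qed.

Lemma hdown n i (e : E B n) : 0 < n -> rng e \in P n.+1 i -> src e \in P n i.
Proof. by case: hS => [[_ _ H3 _] _]; apply: H3. Qed.

Definition inP n (v : V B n) := [exists i, v \in P n i].
Definition pl n (v : V B n) : 'I_k := odflt i0 [pick i | v \in P n i].

Lemma plP n (v : V B n) i : 0 < n -> v \in P n i -> pl v = i.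
Proof.
move=> Hn Hv; rewrite /pl; case: pickP => [j Hj /=|H]; first exact: hdisj Hj Hv.
by have := H i; rewrite Hv.
Qed.

Lemma inP_pl n (v : V B n) : inP v -> v \in P n (pl v).
Proof. by case/existsP => i Hi; rewrite /pl; case: pickP => [j Hj //|H]; have := H i; rewrite Hi. Qed.

Lemma inPI n (v : V B n) i : v \in P n i -> inP v.
Proof. by move=> H; apply/existsP; exists i. Qed.

Lemma in_Vo n (v : V B n) : (v \in Vo P n) = ~~ inP v.
Proof.
rewrite /Vo in_setC; congr negb; apply/bigcupP/existsP => [[i _ H]|[i H]]; by exists i.
Qed.

Lemma hdown' n (e : E B n) : 0 < n -> inP (rng e) -> inP (src e).
Proof. by move=> Hn /existsP[i Hi]; apply/existsP; exists i; apply: hdown. Qed.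

Lemma pick_eq (p : pred 'I_k) q : p q -> (forall j, p j -> j = q) -> odflt i0 [pick j | p j] = q.
Proof. move=> Hq H; case: pickP => [j Hj|H']; first exact: H. by have := H' q; rewrite Hq. Qed.

Definition ap n (v : V B n) : 'I_k := odflt i0 [pick i | d i n v == 1%R].
Definition bm n (v : V B n) : 'I_k := odflt i0 [pick i | d i n v == (-1)%R].

Lemma dform n (v : V B n) : 0 < n -> v \in Vo P n ->
  (forall i, d i n v = bz (i == ap v) - bz (i == bm v))%R /\ (ap v = bm v -> ap v = i0).
Proof.
move=> Hn Hv; have [Hcard Hpair] := hc Hn Hv.
set Z := [set i | d i n v != 0%R] in Hcard Hpair.
have HZ : forall i, i \notin Z -> d i n v = 0%R by move=> i; rewrite inE negbK => /eqP.
move: Hcard; rewrite !inE => /orP[/eqP/cards0_eq Z0|/cards2P[i1 [i2 [N12 EZ]]]].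
  have D0 : forall i, d i n v = 0%R by move=> i; apply: HZ; rewrite Z0 inE.
  have Ea : ap v = i0.
    by rewrite /ap; case: pickP => [j|//]; rewrite D0.
  have Eb : bm v = i0.
    by rewrite /bm; case: pickP => [j|//]; rewrite D0.
  by split => // i; rewrite D0 Ea Eb subrr.
have [p [q [Npq Dp Dq EZ']]] : exists p q, [/\ p != q, d p n v = 1%R, d q n v = (-1)%R & Z = [set p; q]].
  case: (Hpair i1 i2 N12 EZ) => [[E1 E2]|[E1 E2]]; first by exists i1, i2.
  by exists i2, i1; rewrite eq_sym setUC.
have Dother : forall i, i != p -> i != q -> d i n v = 0%R.
  by move=> i N1 N2; apply: HZ; rewrite EZ' !inE negb_or N1 N2.
have Ea : ap v = p.
  apply: pick_eq; first by rewrite Dp.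
  move=> j /eqP Hj; case: (eqVneq j p) => // Njp; case: (eqVneq j q) => [Ejq|Njq].
    by move: Hj; rewrite Ejq Dq.
  by move: Hj; rewrite Dother.
have Eb : bm v = q.
  apply: pick_eq; first by rewrite Dq.
  move=> j /eqP Hj; case: (eqVneq j q) => // Njq; case: (eqVneq j p) => [Ejp|Njp].
    by move: Hj; rewrite Ejp Dp.
  by move: Hj; rewrite Dother.
rewrite Ea Eb; split; last by move=> E; move: Npq; rewrite E eqxx.
move=> i; case: (eqVneq i p) => [->|Nip].
  by rewrite Dp ?eqxx (negbTE Npq) /bz /= subr0.
case: (eqVneq i q) => [->|Niq]; first by rewrite Dq ?eqxx /bz /= ?(negbTE Npq) ?sub0r.
by rewrite Dother // /bz /= subrr.
Qed.



Lemma reach_le n (v : V B n) m (w : V B m) : reach v w -> n <= m.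
Proof. by elim => // n0 v0 m0 e _ IH; apply: leqW. Qed.

Lemma reach_inv n (v : V B n) m (w : V B m.+1) : reach v w -> n <= m ->
  exists e : E B m, rng e = w /\ reach v (src e).
Proof.
have H : forall n (v : V B n) M (w : V B M), reach v w ->
  match M as M0 return V B M0 -> Prop with
  | 0 => fun _ => True
  | S m' => fun w => n <= m' -> exists e : E B m', rng e = w /\ reach v (src e) end w.
  move=> n0 v0 M w0; elim => [n1 v1|n1 v1 m1 e H1 _].
    by case: n1 v1 => //= m' v1; rewrite ltnn.
  by move=> _; exists e.
exact: (H n v m.+1 w).
Qed.

Definition pk n (v : V B n) : {n : nat & V B n} := existT (fun n => V B n) n v.

Lemma pk_inj n (v w : V B n) : pk v = pk w -> v = w.
Proof. exact: (inj_pair2_eq_dec _ Nat.eq_dec). Qed.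

Lemma reach_same n (v : V B n) m (w : V B m) : reach v w -> n = m -> pk v = pk w.
Proof.
elim => [//|n0 v0 m0 e H _ E]; by exfalso; move: (reach_le H); rewrite E ltnn.
Qed.

Lemma down_le ext n (x : V B n) m (y : V B m) : down ext x y -> m <= n.
Proof. by elim => [//|n0 e m0 y0 _ _ IH]; apply: leqW. Qed.

Lemma down_P ext n (x : V B n) m (y : V B m) i : down ext x y -> 0 < m -> x \in P n i -> y \in P m i.
Proof.
elim => [n0 v0 _ H //|n0 e m0 y0 _ Hd IH Hm Hx].
apply: (IH Hm).
by apply: hdown Hx; apply: leq_trans Hm (down_le Hd).
Qed.

Definition lp n (v : V B n) := if inP v then pl v else if n == 2 then i0 else ap v.
Definition lm n (v : V B n) := if inP v then pl v else bm v.
Definition st_ n (e : E B n) := lm (src e).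
Definition en_ n (e : E B n) := lp (src e).
Definition goodM n (v : V B n) := (0 < n) && (inP v || (1 < n)).
Definition goodm n (v : V B n) := (0 < n) && (inP v || (2 < n)).

Lemma nx_ex i n : exists m, n < m /\ (0 < n -> forall (w : V B m) (v : V B n),
   w \in P m i -> v \in P n i -> reach v w).
Proof.
case: n => [|n]; first by exists 1.
case: hS => [[_ _ _ H4] _]; have [m [Hm H]] := H4 n.+1 i isT.
by exists m; split => // _ w v Hw Hv; apply: H.
Qed.

Definition nx i n := sval (constructive_indefinite_description _ (nx_ex i n)).
Lemma nxP i n : n < nx i n /\ (0 < n -> forall (w : V B (nx i n)) (v : V B n),
   w \in P (nx i n) i -> v \in P n i -> reach v w).
Proof. exact: (svalP (constructive_indefinite_description _ (nx_ex i n))). Qed.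

Definition g i j := iter j (nx i) 1.
Lemma g_lt i j : g i j < g i j.+1.
Proof. exact: (nxP i (g i j)).1. Qed.
Lemma g_ge i j : j < g i j.
Proof. elim: j => // j IH; exact: leq_ltn_trans IH (g_lt i j). Qed.
Lemma g_pos i j : 0 < g i j.
Proof. exact: leq_ltn_trans (leq0n j) (g_ge i j). Qed.
Lemma g_mono i j j' : j <= j' -> g i j <= g i j'.
Proof.
elim: j' => [|j' IH]; first by rewrite leqn0 => /eqP ->.
rewrite leq_eqVlt => /orP[/eqP ->//|/IH H]; exact: leq_trans H (ltnW (g_lt i j')).
Qed.
Lemma g_strict i j j' : j < j' -> g i j < g i j'.
Proof. move=> H; exact: leq_trans (g_lt i j) (g_mono i H). Qed.
Lemma g_seg i j j' t : g i j < t <= g i j.+1 -> g i j' < t <= g i j'.+1 -> j = j'.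
Proof.
move=> /andP[A1 A2] /andP[B1 B2]; case: (ltngtP j j') => // H.
  by have := leq_ltn_trans (g_mono i H) B1; rewrite ltnNge A2.
by have := leq_ltn_trans (g_mono i H) A1; rewrite ltnNge B2.
Qed.
Lemma g_reach i j (w : V B (g i j.+1)) (v : V B (g i j)) :
  w \in P (g i j.+1) i -> v \in P (g i j) i -> reach v w.
Proof. exact: (nxP i (g i j)).2 (g_pos i j) w v. Qed.

Lemma u_ex i j : exists v : V B (g i j), v \in P (g i j) i.
Proof. exact: hne (g_pos i j). Qed.
Definition u i j := sval (constructive_indefinite_description _ (u_ex i j)).
Lemma uP i j : u i j \in P (g i j) i.
Proof. exact: (svalP (constructive_indefinite_description _ (u_ex i j))). Qed.

Definition ins n (w : V B n.+1) := [seq e <- enum (E B n) | rng e == w].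
Lemma mem_ins n (w : V B n.+1) e : (e \in ins w) = (rng e == w).
Proof. by rewrite mem_filter mem_enum andbT. Qed.
Lemma uniq_ins n (w : V B n.+1) : uniq (ins w).
Proof. by rewrite filter_uniq // enum_uniq. Qed.

Definition hdP n (p : E B n -> Prop) (s : seq (E B n)) := if s is e :: _ then p e else False.
Definition ltP n (p : E B n -> Prop) (s : seq (E B n)) := if s is e :: s' then p (last e s') else False.

Definition Sp n (w : V B n.+1) (s : seq (E B n)) : Prop :=
 if n == 0 then True else
 if inP w then (forall i j, w \in P n.+1 i -> g i j < n.+1 <= g i j.+1 -> reach (u i j) w ->
                 (if odd j then @hdP n else @ltP n) (fun e => reach (u i j) (src e)) s)
 else if n == 1 then ltP (fun e => src e \in P n i0) s
 else if n == 2 then hdP (fun e => src e \in P n (bm w)) s /\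
                     ltP (fun e => src e \in P n (ap w) \/ (ap w = bm w /\ src e \in Vo P n)) s
 else [/\ sorted (lnk (@st_ n) (@en_ n)) s, hdP (fun e => st_ e = bm w) s,
          ltP (fun e => en_ e = ap w) s &
          (if odd n then ltP (fun e => inP (src e)) s else hdP (fun e => inP (src e)) s)].

Definition Spec n (w : V B n.+1) s := perm_eq s (ins w) /\ Sp w s.


Lemma ins_ex n (w : V B n.+1) (v : V B n) : 0 < n -> w \in Vo P n.+1 ->
  exists e, e \in ins w /\ src e = v.
Proof. by move=> Hn Hw; have [e [Hs Hr]] := hfull v Hn Hw; exists e; rewrite mem_ins Hr eqxx. Qed.

Lemma ex_last n (w : V B n.+1) (p : E B n -> Prop) e0 : e0 \in ins w -> p e0 ->
  exists s, perm_eq s (ins w) /\ ltP p s.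
Proof.
move=> H0 Hp; exists (rcons (rem e0 (ins w)) e0); split.
  by rewrite perm_rcons perm_sym perm_to_rem.
by case: (rem e0 (ins w)) => [|x r] //=; rewrite last_rcons.
Qed.

Lemma ex_head n (w : V B n.+1) (p : E B n -> Prop) e0 : e0 \in ins w -> p e0 ->
  exists s, perm_eq s (ins w) /\ hdP p s.
Proof.
move=> H0 Hp; exists (e0 :: rem e0 (ins w)); split => //.
by rewrite perm_sym perm_to_rem.
Qed.

Lemma ex_both n (w : V B n.+1) (p q : E B n -> Prop) e1 e2 : e1 != e2 -> e1 \in ins w ->
  e2 \in ins w -> p e1 -> q e2 -> exists s, perm_eq s (ins w) /\ (hdP p s /\ ltP q s).
Proof.
move=> N H1 H2 Hp Hq; exists (e1 :: rcons (rem e2 (rem e1 (ins w))) e2); split; last first.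
  by split => //=; rewrite last_rcons.
rewrite perm_sym; apply: perm_trans (perm_to_rem H1) _; rewrite perm_cons perm_sym perm_rcons perm_sym.
by apply: perm_to_rem; rewrite (mem_rem_uniq e1 (uniq_ins w)) inE eq_sym N H2.
Qed.

Lemma Vo_ne n (i j : 'I_k) : 0 < n -> i != j -> exists v : V B n, v \in Vo P n.
Proof.
move=> Hn Nij; apply: NNPP => No.
have Hz : lim_zero P (fun n v => \sum_(l < k) bz (l == i) * d l n v)%R.
  by exists n; split => // v Hv; exfalso; apply: No; exists v.
have := (proj1 (hA _) Hz) i j; rewrite eqxx eq_sym (negbTE Nij) /bz.
by [].
Qed.

Lemma spec_ex n (w : V B n.+1) : exists s, Spec w s.
Proof.
case E0: (n == 0).
  by exists (ins w); split => //; rewrite /Sp E0.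
have Hn : 0 < n by rewrite lt0n E0.
case Iw: (inP w).
  set i := pl w; have Hw : w \in P n.+1 i := inP_pl (introT idP Iw).
  case: (classic (exists j, g i j < n.+1 <= g i j.+1 /\ reach (u i j) w)) => [[j0 [Hb Hr]]|No].
    have Hle : g i j0 <= n by rewrite -ltnS; case/andP: Hb.
    have [e0 [Re0 Hre]] := reach_inv Hr Hle.
    have Hin : e0 \in ins w by rewrite mem_ins Re0.
    have fin : forall s, (if odd j0 then @hdP n else @ltP n) (fun e => reach (u i j0) (src e)) s ->
        perm_eq s (ins w) -> exists s, Spec w s.
      move=> s Hs Ps; exists s; split => //; rewrite /Sp E0 Iw => i' j Hw' Hb' Hr'.
      have Ei : i' = i by apply: (hdisj (isT : 0 < n.+1)) Hw' Hw.
      subst i'; have Ej : j = j0 by apply: (g_seg Hb').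
      by subst j.
    case Eo: (odd j0).
      have [s [Ps Hs]] := @ex_head n w (fun e => reach (u i j0) (src e)) e0 Hin Hre.
      by apply: (fin s); rewrite ?Eo.
    have [s [Ps Hs]] := @ex_last n w (fun e => reach (u i j0) (src e)) e0 Hin Hre.
    by apply: (fin s); rewrite ?Eo.
  exists (ins w); split => //; rewrite /Sp E0 Iw => i' j Hw' Hb' Hr'; exfalso.
  have Ei : i' = i by apply: (hdisj (isT : 0 < n.+1)) Hw' Hw.
  by subst i'; apply: No; exists j.
have Vw : w \in Vo P n.+1 by rewrite in_Vo Iw.
case E1: (n == 1).
  have [v Hv] := hne i0 Hn; have [e0 [Hin Hs]] := ins_ex v Hn Vw.
  have Hs' : src e0 \in P n i0 by rewrite Hs.
  have [s [Ps Hl]] := @ex_last n w (fun e => src e \in P n i0) e0 Hin Hs'.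
  by exists s; split => //; rewrite /Sp E0 Iw E1.
have [Dw Dab] := dform (isT : 0 < n.+1) Vw.
case E2: (n == 2).
  set a := ap w; set b := bm w.
  have [vb Hvb] := hne b Hn; have [e1 [H1 Hs1]] := ins_ex vb Hn Vw.
  have Pe1 : src e1 \in P n b by rewrite Hs1.
  case: (eqVneq a b) => [Eab|Nab].
    case: (classic (exists e2, [/\ e2 \in ins w, e2 != e1 & (src e2 \in P n a \/ src e2 \in Vo P n)])).
      case=> e2 [H2 N2 Q2].
      have N2' : e1 != e2 by rewrite eq_sym.
      have Q2' : src e2 \in P n a \/ (a = b /\ src e2 \in Vo P n) by case: Q2 => Q2; [left | right].
      have [s [Ps [Hh Hl]]] := @ex_both n w (fun e => src e \in P n b)
          (fun e => src e \in P n a \/ (a = b /\ src e \in Vo P n)) e1 e2 N2' H1 H2 Pe1 Q2'.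
      by exists s; split => //; rewrite /Sp E0 Iw E1 E2.
    move=> No; exists [:: e1]; split; last by rewrite /Sp E0 Iw E1 E2 /= -/a -/b; split => //; left; rewrite Eab.
    apply: uniq_perm => //; first exact: uniq_ins.
    move=> e; rewrite inE; apply/eqP/idP => [->//|He].
    apply: NNPP => Ne; apply: (No); exists e; split => //; first by apply/eqP.
    case: (boolP (inP (src e))) => [Ie|]; last by rewrite -in_Vo; right.
    set j := pl (src e); have Pj : src e \in P n j := inP_pl Ie.
    case: (eqVneq j a) => [Eja|Nja]; first by left; rewrite -Eja.
    have [v Hv] := Vo_ne Hn Nja; have [e' [H' Hs']] := ins_ex v Hn Vw.
    exfalso; apply: (No); exists e'; split => //; last by right; rewrite Hs'.
    apply/negP => /eqP Ee; move: Hv; rewrite -Hs' Ee Hs1 in_Vo; move/negP; apply.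
    exact: inPI Hvb.
  have [va Hva] := hne a Hn; have [e2 [H2 Hs2]] := ins_ex va Hn Vw.
  have Pe2 : src e2 \in P n a by rewrite Hs2.
  have N12 : e1 != e2.
    apply/negP => /eqP E; move: Pe1; rewrite E => Pb.
    by move/eqP: Nab; apply; apply: (hdisj Hn Pe2 Pb).
  have [s [Ps [Hh Hl]]] := @ex_both n w (fun e => src e \in P n b)
      (fun e => src e \in P n a \/ (a = b /\ src e \in Vo P n)) e1 e2 N12 H1 H2 Pe1 (or_introl Pe2).
  by exists s; split => //; rewrite /Sp E0 Iw E1 E2.
have L3 : 2 < n.
  by move/negbT/eqP: E0; move/negbT/eqP: E1; move/negbT/eqP: E2; lia.
have Hst : forall e : E B n, inP (src e) -> st_ e = pl (src e) by move=> e; rewrite /st_ /lm => ->.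
have Hen : forall e : E B n, inP (src e) -> en_ e = pl (src e) by move=> e; rewrite /en_ /lp => ->.
have VoSt : forall e : E B n, ~~ inP (src e) -> st_ e = bm (src e) /\ en_ e = ap (src e).
  by move=> e Ie; rewrite /st_ /en_ /lm /lp (negbTE Ie) E2.
set a := ap w in Dw *; set b := bm w in Dw *.
pose c := if odd n then a else b.
have [vl Hvl] := hne c Hn; have [ll [Hl Hsl]] := ins_ex vl Hn Vw.
have Pl : src ll \in P n c by rewrite Hsl.
have Stl : st_ ll = c by rewrite Hst ?(plP Hn Pl) // (inPI Pl).
have Enl : en_ ll = c by rewrite Hen ?(plP Hn Pl) // (inPI Pl).
set Sr := rem ll (ins w).
have Hbal : forall i, netc (@st_ n) (@en_ n) Sr i = (bz (i == a) - bz (i == b))%R.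
  move=> i.
  have -> : netc (@st_ n) (@en_ n) Sr i = netc (@st_ n) (@en_ n) (ins w) i.
    by rewrite (netc_perm (@st_ n) (@en_ n) i (perm_to_rem Hl)) netc_cons Stl Enl subrr add0r.
  rewrite -Dw (hthr i Hn Vw) netc_sum /ins big_filter.
  rewrite (partition_big (@src B n) predT) //.
  rewrite [RHS]big_mkcond /=; apply: eq_bigr => v _.
  rewrite (eq_bigr (fun _ => if inP v then 0%R else d i n v)); last first.
    move=> t /andP[_ /eqP <-]; case: (boolP (inP (src t))) => It.
      by rewrite Hst // Hen // subrr.
    have [-> ->] := VoSt t It.
    have Vt : src t \in Vo P n by rewrite in_Vo.
    by rewrite ((dform Hn Vt).1 i) ![_ == i]eq_sym.
  rewrite big_enum_cond /=.
  rewrite (eq_bigl (mem [set e : E B n | (src e == v) && (rng e == w)])); last first.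
    by move=> t; rewrite !inE andbC.
  rewrite sumr_const -mulr_natl natz in_Vo.
  by case: (inP v); rewrite ?mulr0.
have Hcon : forall A : {set 'I_k}, A != set0 -> A != setT ->
    has (fun t => (st_ t \in A) != (en_ t \in A)) Sr.
  move=> A A0 AT; case/set0Pn: A0 => i1 Hi1.
  have [i2 Hi2] : exists i2, i2 \notin A.
    apply: NNPP => H; move/negP: AT; apply; apply/eqP/setP => x; rewrite inE.
    apply/idP; apply: NNPP => Hx; apply: H; exists x; exact/negP.
  pose cc := fun l => bz (l \in A).
  have NZ : ~ lim_zero P (fun n v => \sum_(l < k) cc l * d l n v)%R.
    move/(proj1 (hA cc)) => H; have := H i1 i2; by rewrite /cc Hi1 (negbTE Hi2).
  have [v [Hv Hnz]] : exists v, v \in Vo P n /\ (\sum_(l < k) cc l * d l n v != 0)%R.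
    apply: NNPP => H; apply: NZ; exists n; split => // v Hv; apply/eqP; apply: NNPP => Hz.
    by apply: H; exists v; split => //; apply/negP.
  have [Dv _] := dform Hn Hv.
  have S1 : forall p, (\sum_(l < k) cc l * bz (l == p) = cc p)%R.
    move=> p; rewrite (bigD1 p) //= eqxx /bz mulr1 big1 ?addr0 // => l Nl.
    by rewrite (negbTE Nl) mulr0.
  have Hsum : (\sum_(l < k) cc l * d l n v = cc (ap v) - cc (bm v))%R.
    rewrite (eq_bigr (fun l => cc l * bz (l == ap v) - cc l * bz (l == bm v)))%R; last first.
      by move=> l _; rewrite Dv mulrBr.
    by rewrite sumrB !S1.
  have Cross : (bm v \in A) != (ap v \in A).
    move: Hnz; rewrite Hsum /cc /bz; case: (ap v \in A); case: (bm v \in A) => //.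
  have [e [He Hse]] := ins_ex v Hn Vw.
  have Iv : ~~ inP v by rewrite -in_Vo.
  have Ie : ~~ inP (src e) by rewrite Hse.
  apply/hasP; exists e.
    rewrite (mem_rem_uniq ll (uniq_ins w)) inE He andbT.
    by apply/negP => /eqP E; move: Ie; rewrite E (inPI Pl).
  by have [-> ->] := VoSt e Ie; rewrite Hse.
have [s0 [Ps0 Ss0 Es0]] := euler i0 Hbal Hcon.
have Pm : perm_eq (ll :: s0) (ins w).
  by rewrite perm_sym; apply: perm_trans (perm_to_rem Hl) _; rewrite perm_cons perm_sym.
have Ill : inP (src ll) := inPI Pl.
case Eo: (odd n).
  have Stl' : st_ ll = a by rewrite Stl /c Eo.
  have Enl' : en_ ll = a by rewrite Enl /c Eo.
  exists (rcons s0 ll); split; first by rewrite perm_rcons.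
  rewrite /Sp E0 Iw E1 E2 Eo -/a -/b.
  move: Ss0 Es0; case: (s0) => [|t s0'] /= Ss0 Es0.
    by split => //=; rewrite -?Es0.
  case: Es0 => Est Een.
  split => //=; rewrite ?last_rcons //.
  by rewrite rcons_path Ss0 /lnk /= Een Stl' eqxx.
have Stl' : st_ ll = b by rewrite Stl /c Eo.
have Enl' : en_ ll = b by rewrite Enl /c Eo.
exists (ll :: s0); split => //.
rewrite /Sp E0 Iw E1 E2 Eo -/a -/b.
move: Ss0 Es0; case: (s0) => [|t s0'] /= Ss0 Es0.
  by split => //=; rewrite Enl' Es0.
case: Es0 => Est Een.
split => //=.
by rewrite /lnk Enl' Est eqxx Ss0.
Qed.

Lemma vne n : exists v : V B n, True.
Proof.
elim: n => [|n [v _]].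
  have : 0 < #|V B 0| by rewrite V0_single.
  by case/card_gt0P => v _; exists v.
by have [e _] := src_surj v; exists (rng e).
Qed.

Lemma ene n : exists e : E B n, True.
Proof. by have [v _] := vne n; have [e _] := src_surj v; exists e. Qed.

Definition edef n : E B n := sval (constructive_indefinite_description _ (ene n)).

Definition ordw n (w : V B n.+1) := sval (constructive_indefinite_description _ (spec_ex w)).
Lemma ordwP n (w : V B n.+1) : Spec w (ordw w).
Proof. exact: (svalP (constructive_indefinite_description _ (spec_ex w))). Qed.

Lemma mem_ordw n (w : V B n.+1) e : (e \in ordw w) = (rng e == w).
Proof. by rewrite (perm_mem (ordwP w).1) mem_ins. Qed.
Lemma uniq_ordw n (w : V B n.+1) : uniq (ordw w).
Proof. by rewrite (perm_uniq (ordwP w).1) uniq_ins. Qed.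
Lemma ordw_ne n (w : V B n.+1) : ordw w != [::].
Proof.
have [e He] := rng_surj w; apply/negP => /eqP E.
by have := mem_ordw w e; rewrite E He eqxx.
Qed.

Definition sel b n (w : V B n.+1) : E B n :=
  if b then last (edef n) (ordw w) else head (edef n) (ordw w).

Lemma sel_mem b n (w : V B n.+1) : sel b w \in ordw w.
Proof.
rewrite /sel; have := ordw_ne w; case: (ordw w) => // e s _.
by case: b; [exact: (mem_last e s) | exact: mem_head].
Qed.
Lemma sel_rng b n (w : V B n.+1) : rng (sel b w) = w.
Proof. by apply/eqP; rewrite -mem_ordw sel_mem. Qed.
Lemma hdP_sel n (p : E B n -> Prop) (w : V B n.+1) : hdP p (ordw w) -> p (sel false w).
Proof. by rewrite /sel; case: (ordw w). Qed.
Lemma ltP_sel n (p : E B n -> Prop) (w : V B n.+1) : ltP p (ordw w) -> p (sel true w).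
Proof. by rewrite /sel; case: (ordw w). Qed.

Definition ordlt n : rel (E B n) := fun e f =>
  (rng e == rng f) && (index e (ordw (rng f)) < index f (ordw (rng f))).

Lemma is_order_ordlt : is_order ordlt.
Proof.
move=> n e f h; split.
- by case/andP => /eqP.
- by rewrite /ordlt ltnn andbF.
- rewrite /ordlt => /andP[/eqP E1 H1] /andP[/eqP E2 H2]; rewrite E1 E2 eqxx /=.
  by rewrite E2 in H1; apply: ltn_trans H1 H2.
- move=> E; rewrite /ordlt E eqxx /=.
  case: (ltngtP (index e (ordw (rng f))) (index f (ordw (rng f)))) => //; rewrite ?orbT //.
  move=> Hi; apply/orP; left; apply/eqP.
  have He : e \in ordw (rng f) by rewrite mem_ordw E.
  have Hf : f \in ordw (rng f) by rewrite mem_ordw.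
  by rewrite -(nth_index (edef n) He) Hi (nth_index (edef n) Hf).
Qed.

Lemma sel_max n (w : V B n.+1) : is_max ordlt (sel true w).
Proof.
move=> f; rewrite sel_rng => Hf.
have Hu := uniq_ordw w; have Hne := ordw_ne w.
have fin : f \in ordw w by rewrite mem_ordw Hf.
move: Hu Hne fin; rewrite /ordlt sel_rng Hf eqxx /= /sel.
case: (ordw w) => // x s Hu _ fin.
rewrite (index_last Hu).
have : index f (x :: s) < (size s).+1 by rewrite index_mem.
rewrite ltnS leq_eqVlt => /orP[/eqP Ei|]; last by right.
by left; rewrite -(nth_index x fin) Ei -(index_last Hu) nth_index // mem_last.
Qed.

Lemma sel_min n (w : V B n.+1) : is_min ordlt (sel false w).
Proof.
move=> f; rewrite sel_rng => Hf.
have Hu := uniq_ordw w; have Hne := ordw_ne w.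
have fin : f \in ordw w by rewrite mem_ordw Hf.
move: Hu Hne fin; rewrite /ordlt sel_rng Hf eqxx /= /sel.
case: (ordw w) => // x s Hu _ fin /=; rewrite eqxx.
case: (eqVneq x f) => [->|N]; first by left.
by right.
Qed.

Lemma max_sel n (e : E B n) : is_max ordlt e <-> e = sel true (rng e).
Proof.
split; last by move=> ->; apply: sel_max.
move=> H; have [//|L] := H (sel true (rng e)) (sel_rng _ _).
exfalso; case/andP: L => _; have := @sel_max _ (rng e) e (esym (sel_rng _ _)).
case=> [E|/andP[_ L2] L1]; first by rewrite -E ltnn.
by rewrite sel_rng in L2; have := ltn_trans L1 L2; rewrite ltnn.
Qed.

Lemma min_sel n (e : E B n) : is_min ordlt e <-> e = sel false (rng e).
Proof.
split; last by move=> ->; apply: sel_min.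
move=> H; have [/esym E //|L] := H (sel false (rng e)) (sel_rng _ _).
have := @sel_min _ (rng e) e (esym (sel_rng _ _)); case=> [//|L2]; exfalso.
case/andP: L => _; case/andP: L2 => _; rewrite !sel_rng => L2 L1.
by have := ltn_trans L1 L2; rewrite ltnn.
Qed.

Lemma sorted_nth_rel (T : Type) (r : rel T) (x0 : T) (s : seq T) i :
  sorted r s -> i.+1 < size s -> r (nth x0 s i) (nth x0 s i.+1).
Proof.
case: s => [|x s] //= /(pathP x0) H Hi; exact: H.
Qed.

Lemma succ_lnk n (e f : E B n) : is_succ ordlt e f ->
  sorted (lnk (@st_ n) (@en_ n)) (ordw (rng e)) -> en_ e = st_ f.
Proof.
case=> Ef Lef Hg Hs; set w := rng e in Ef Lef Hg Hs *.
have Hu := uniq_ordw w.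
have fin : f \in ordw w by rewrite mem_ordw Ef.
have ein : e \in ordw w by rewrite mem_ordw.
move: Lef; rewrite /ordlt Ef eqxx /= => Lef.
have Hi : (index e (ordw w)).+1 < size (ordw w).
  by apply: leq_ltn_trans Lef _; rewrite index_mem.
set h := nth (edef n) (ordw w) (index e (ordw w)).+1.
have hin : h \in ordw w by apply: mem_nth.
have Ih : index h (ordw w) = (index e (ordw w)).+1 by apply: index_uniq.
have Eh : h = f.
  have Rh : rng h = w by apply/eqP; rewrite -mem_ordw.
  have Leh : ordlt e h by rewrite /ordlt Rh eqxx /= Ih.
  case: (Hg h Rh Leh) => // L.
  move: L; rewrite /ordlt Rh Ef eqxx /= Ih ltnS => L.
  by have := leq_trans Lef L; rewrite ltnn.
have := sorted_nth_rel (edef n) Hs Hi.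
rewrite nth_index // -/h Eh /lnk => /eqP.
done.
Qed.



Lemma step_max n (e : E B n) : 0 < n -> e = sel true (rng e) -> goodM (src e) /\ lp (src e) = lp (rng e).
Proof.
move=> Hn He; set w := rng e in He *.
case: (boolP (inP w)) => Iw.
  have Hw := inP_pl Iw; have Hs := hdown Hn Hw.
  split; first by rewrite /goodM Hn (inPI Hs).
  by rewrite /lp (inPI Hs) Iw (plP Hn Hs).
have Sw := (ordwP w).2; move: Sw; rewrite /Sp (negbTE Iw) (gtn_eqF Hn).
have Vw : w \in Vo P n.+1 by rewrite in_Vo.
case En1: (n == 1).
  move/ltP_sel; rewrite -He => Hs.
  have E2 : (n.+1 == 2) = true by rewrite eqSS En1.
  split; first by rewrite /goodM Hn (inPI Hs).
  by rewrite /lp (inPI Hs) (negbTE Iw) E2 (plP Hn Hs).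
have E2 : (n.+1 == 2) = false by rewrite eqSS En1.
case En2: (n == 2).
  case=> _ /ltP_sel; rewrite -He => [[Hs|[Eab Hs]]].
    split; first by rewrite /goodM Hn (inPI Hs).
    by rewrite /lp (inPI Hs) (negbTE Iw) E2 (plP Hn Hs).
  have L1 : 1 < n by rewrite (eqP En2).
  move: Hs; rewrite in_Vo => Hs.
  split; first by rewrite /goodM Hn L1 orbT.
  by rewrite /lp (negbTE Hs) (negbTE Iw) E2 En2 ((dform (isT : 0 < n.+1) Vw).2 Eab).
case=> _ _ /ltP_sel; rewrite -He /en_ => Hl _.
have L1 : 1 < n by case: n Hn En1 {e He w Iw Vw E2 En2 Hl} => [|[|n]].
split; first by rewrite /goodM Hn L1 orbT.
by rewrite Hl /lp (negbTE Iw) E2.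
Qed.

Lemma step_min n (e : E B n) : 0 < n -> e = sel false (rng e) -> goodm (rng e) ->
  goodm (src e) /\ lm (src e) = lm (rng e).
Proof.
move=> Hn He; set w := rng e in He *.
case: (boolP (inP w)) => Iw Gw.
  have Hw := inP_pl Iw; have Hs := hdown Hn Hw.
  split; first by rewrite /goodm Hn (inPI Hs).
  by rewrite /lm (inPI Hs) Iw (plP Hn Hs).
have L2 : 2 < n.+1 by move: Gw; rewrite /goodm (negbTE Iw).
have Sw := (ordwP w).2; move: Sw; rewrite /Sp (negbTE Iw) (gtn_eqF Hn).
have En1 : (n == 1) = false by case: n Hn L2 {e He w Iw Gw} => [|[|n]].
rewrite En1.
case En2: (n == 2).
  case=> /hdP_sel; rewrite -He => Hs _.
  split; first by rewrite /goodm Hn (inPI Hs).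
  by rewrite /lm (inPI Hs) (negbTE Iw) (plP Hn Hs).
case=> _ /hdP_sel; rewrite -He /st_ => Hl _ _.
have L3 : 2 < n by case: n Hn En1 En2 {e He w Iw Gw L2 Hl} => [|[|[|n]]].
split; first by rewrite /goodm Hn L3 orbT.
by rewrite Hl /lm (negbTE Iw).
Qed.

Lemma down_max N (x : V B N) m (y : V B m) : down (@is_max B ordlt) x y -> 0 < m -> goodM x ->
  goodM y /\ lp y = lp x.
Proof.
elim => [n0 v0 _ Hg //|n0 e m0 y0 Hmax Hd IH Hm Hg].
have Hn0 : 0 < n0 := leq_trans Hm (down_le Hd).
have [Gs Ls] := step_max Hn0 (proj1 (max_sel e) Hmax).
by have [Gy Ly] := IH Hm Gs; split => //; rewrite Ly Ls.
Qed.

Lemma down_min N (x : V B N) m (y : V B m) : down (@is_min B ordlt) x y -> 0 < m -> goodm x ->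
  goodm y /\ lm y = lm x.
Proof.
elim => [n0 v0 _ Hg //|n0 e m0 y0 Hmin Hd IH Hm Hg].
have Hn0 : 0 < n0 := leq_trans Hm (down_le Hd).
have [Gs Ls] := step_min Hn0 (proj1 (min_sel e) Hmin) Hg.
by have [Gy Ly] := IH Hm Gs; split => //; rewrite Ly Ls.
Qed.

Lemma mplus_ex n (v : V B n) : goodM v -> mplus P ordlt v (lp v).
Proof.
elim: n v => [|n IH] v; first by rewrite /goodM.
case: n IH v => [|n] IH v Hg.
  have Iv : inP v by move: Hg; rewrite /goodM /= orbF.
  exists v; split; first exact: down_refl.
  by rewrite /lp Iv; apply: inP_pl.
set e := sel true v; have Re : rng e = v := sel_rng _ _.
have He : e = sel true (rng e) by rewrite Re.
have [Gs Ls] := step_max (isT : 0 < n.+1) He.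
have [a [Hd Ha]] := IH (src e) Gs.
exists a; split; last by rewrite -Re -Ls.
rewrite -Re; apply: down_step Hd; exact/max_sel.
Qed.

Lemma mminus_ex n (v : V B n) : goodm v -> mminus P ordlt v (lm v).
Proof.
elim: n v => [|n IH] v; first by rewrite /goodm.
case: n IH v => [|n] IH v Hg.
  have Iv : inP v by move: Hg; rewrite /goodm /= orbF.
  exists v; split; first exact: down_refl.
  by rewrite /lm Iv; apply: inP_pl.
set e := sel false v; have Re : rng e = v := sel_rng _ _.
have He : e = sel false (rng e) by rewrite Re.
have Gr : goodm (rng e) by rewrite Re.
have [Gs Ls] := step_min (isT : 0 < n.+1) He Gr.
have [a [Hd Ha]] := IH (src e) Gs.
exists a; split; last by rewrite -Re -Ls.
rewrite -Re; apply: down_step Hd; exact/min_sel.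
Qed.

Lemma mplus_uniq n (v : V B n) i : mplus P ordlt v i -> goodM v -> i = lp v.
Proof.
case=> a [Hd Ha] Hg; have [Ga La] := down_max Hd isT Hg.
have Ia : inP a by move: Ga; rewrite /goodM /= orbF.
by rewrite -La /lp Ia (@plP 1 a i isT Ha).
Qed.



Definition par b (p : {n : nat & V B n}) : {n : nat & V B n} :=
  match p with existT n v =>
    match n as n0 return V B n0 -> {n : nat & V B n} with
    | 0 => fun v => existT _ 0 v
    | S t => fun w => existT _ t (src (sel b w))
    end v
  end.

Lemma par_S b t (w : V B t.+1) : par b (pk w) = pk (src (sel b w)).
Proof. by []. Qed.

Lemma iter_lvl b m p : projT1 (iter m (par b) p) = projT1 p - m.
Proof.
elim: m => [|m IH]; first by rewrite subn0.
by rewrite iterS subnS -IH; case: (iter m (par b) p) => [[|t] w].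
Qed.

Definition inPk i (p : {n : nat & V B n}) := match p with existT n v => v \in P n i end.

Lemma par_inPk b i p : inPk i p -> 1 < projT1 p -> inPk i (par b p).
Proof.
case: p => [[|[|t]] w] //= Hw _; apply: (@hdown t.+1 i (sel b w) isT).
by rewrite sel_rng.
Qed.

Lemma iter_inPk b i m p : inPk i p -> m < projT1 p -> inPk i (iter m (par b) p).
Proof.
move=> Hp; elim: m => [|m IH] Hm //; rewrite iterS; apply: par_inPk.
  by apply: IH; apply: ltnW.
by rewrite iter_lvl ltn_subRL addn1.
Qed.

Lemma funnel i j t (y : V B t) : g i j <= t <= g i j.+1 -> y \in P t i -> reach (u i j) y ->
  iter (t - g i j) (par (~~ odd j)) (pk y) = pk (u i j).
Proof.
elim: t y => [|t IH] y.
  by rewrite leqn0 => /andP[/eqP E]; exfalso; move: (g_pos i j); rewrite E.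
case/andP => H1 H2 Hy Hr.
case: (eqVneq t.+1 (g i j)) => [E|N].
  have -> : t.+1 - g i j = 0 by rewrite E subnn.
  by rewrite /= (reach_same Hr (esym E)).
have Lt : g i j < t.+1 by rewrite ltn_neqAle eq_sym N H1.
have Ht : 0 < t by apply: leq_trans (g_pos i j) _; rewrite -ltnS.
have Sy := (ordwP y).2; move: Sy; rewrite /Sp (gtn_eqF Ht) (inPI Hy) => Sy.
have Hsel : reach (u i j) (src (sel (~~ odd j) y)).
  have := Sy i j Hy; rewrite Lt H2 => /(_ isT Hr).
  by case: (odd j) => /=; [apply: hdP_sel | apply: ltP_sel].
have Hs : src (sel (~~ odd j) y) \in P t i by apply: hdown Ht _; rewrite sel_rng.
have -> : t.+1 - g i j = (t - g i j).+1 by rewrite subSn // -ltnS.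
rewrite iterSr par_S; apply: IH => //.
by rewrite -ltnS Lt (leq_trans (leqnSn t) H2).
Qed.

Lemma funnel_all i j (y : V B (g i j.+1)) : y \in P (g i j.+1) i ->
  iter (g i j.+1 - g i j) (par (~~ odd j)) (pk y) = pk (u i j).
Proof.
move=> Hy; apply: funnel => //; last by apply: g_reach Hy (uP i j).
by rewrite leqnn andbT ltnW // g_lt.
Qed.

Definition J (b : bool) n := (n.*2).+1 + b.
Lemma J_odd b n : ~~ odd (J b n) = b.
Proof. by rewrite /J oddD /= odd_double; case: b. Qed.
Lemma J_S b n : J b n.+1 = (J b n).+2.
Proof. by rewrite /J doubleS. Qed.
Lemma gJ b i n : n < g i (J b n).
Proof.
apply: leq_ltn_trans (g_ge i _); rewrite /J.
apply: leq_trans (leq_addr b _); apply: leqW; rewrite -addnn; apply: leq_addr.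
Qed.

Definition Zpk b i n := iter (g i (J b n) - n) (par b) (pk (u i (J b n))).

Lemma Zpk_lvl b i n : projT1 (Zpk b i n) = n.
Proof. by rewrite iter_lvl /= subKn // ltnW // gJ. Qed.

Lemma chain2 b i j : ~~ odd j = b ->
  iter (g i j.+2 - g i j) (par b) (pk (u i j.+2)) = pk (u i j).
Proof.
move=> Hb.
have L1 := g_lt i j; have L2 := g_lt i j.+1.
have -> : g i j.+2 - g i j = (g i j.+1 - g i j) + (g i j.+2 - g i j.+1).
  by rewrite addnC addnBA ?subnK // ltnW.
rewrite (iterD (g i j.+1 - g i j) (g i j.+2 - g i j.+1)).
have Hl := iter_lvl b (g i j.+2 - g i j.+1) (pk (u i j.+2)).
have Hi := @iter_inPk b i (g i j.+2 - g i j.+1) (pk (u i j.+2)) (uP i j.+2).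
move: Hl Hi; case: (iter (g i j.+2 - g i j.+1) (par b) (pk (u i j.+2))) => l y Hl Hi.
change (l = g i j.+2 - (g i j.+2 - g i j.+1)) in Hl.
rewrite subKn in Hl; last by apply: ltnW.
subst l.
have Hm : g i j.+2 - g i j.+1 < g i j.+2.
  by have := g_pos i j; lia.
have Hy : y \in P (g i j.+1) i by apply: (Hi Hm).
rewrite -Hb; exact: (funnel_all Hy).
Qed.

Lemma Zpk_step b i n : par b (Zpk b i n.+1) = Zpk b i n.
Proof.
rewrite /Zpk J_S -iterS.
have G1 := gJ b i n; have G3 := g_lt i (J b n); have G2 := g_lt i (J b n).+1.
have -> : (g i (J b n).+2 - n.+1).+1 = (g i (J b n) - n) + (g i (J b n).+2 - g i (J b n)) by lia.
by rewrite (iterD (g i (J b n) - n)) chain2 // J_odd.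
Qed.

Lemma zex b i n : exists e : E B n, pk (rng e) = Zpk b i n.+1 /\ e = sel b (rng e).
Proof.
have := Zpk_lvl b i n.+1; case: (Zpk b i n.+1) => l w /= Hl; subst l.
by exists (sel b w); rewrite sel_rng.
Qed.

Definition zed b i n := sval (constructive_indefinite_description _ (zex b i n)).
Lemma zedP b i n : pk (rng (zed b i n)) = Zpk b i n.+1 /\ zed b i n = sel b (rng (zed b i n)).
Proof. exact: (svalP (constructive_indefinite_description _ (zex b i n))). Qed.

Lemma zed_src b i n : pk (src (zed b i n)) = Zpk b i n.
Proof.
have [E1 E2] := zedP b i n.
by rewrite {1}E2 -par_S E1 Zpk_step.
Qed.

Lemma zed_ipath b i : ipath (zed b i).
Proof. by move=> n; apply: pk_inj; rewrite zed_src (zedP b i n).1. Qed.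

Lemma zed_P b i n : 0 < n -> src (zed b i n) \in P n i.
Proof.
move=> Hn; have := @iter_inPk b i (g i (J b n) - n) (pk (u i (J b n))) (uP _ _).
rewrite -/(Zpk b i n) -zed_src /=; apply.
change (g i (J b n) - n < g i (J b n)); by have := g_pos i (J b n); lia.
Qed.

Lemma often b N : exists n, [/\ N <= n, 0 < n &
  forall w : V B n.+1, w \in Vo P n.+1 -> inP (src (sel b w))].
Proof.
case: b.
  exists (N.*2.+1); split => //; first by rewrite -addnn -addSn leq_addl.
  move=> w; rewrite in_Vo => Iw; have := (ordwP w).2; rewrite /Sp (negbTE Iw).
  have E0 : (N.*2.+1 == 0) = false by [].
  rewrite E0; case E1: (N.*2.+1 == 1); first by move/ltP_sel; apply: inPI.
  have E2 : (N.*2.+1 == 2) = false.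
    by rewrite eqSS; apply/negP => /eqP H; move: (odd_double N); rewrite H.
  have Eo : odd N.*2.+1 = true by rewrite /= odd_double.
  by rewrite E2 Eo; case=> _ _ _ /ltP_sel.
exists (N.*2.+2); split => //; first by rewrite -addnn -addSn leqW // leq_addl.
move=> w; rewrite in_Vo => Iw; have := (ordwP w).2; rewrite /Sp (negbTE Iw).
have E0 : (N.*2.+2 == 0) = false by [].
have E1 : (N.*2.+2 == 1) = false by [].
rewrite E0 E1; case E2: (N.*2.+2 == 2); first by case=> /hdP_sel H _; exact: inPI H.
have Eo : odd N.*2.+2 = false by rewrite /= odd_double.
by rewrite Eo; case=> _ _ _ /hdP_sel.
Qed.

Section Paths.
Variable b : bool.
Variable x : forall n, E B n.
Hypothesis Hp : ipath x.
Hypothesis Hs : forall n, x n = sel b (rng (x n)).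

Lemma path_par t : pk (src (x t)) = par b (pk (src (x t.+1))).
Proof. by rewrite -(Hp t) {1}(Hs t). Qed.

Lemma path_iter m t : pk (src (x t)) = iter m (par b) (pk (src (x (t + m)))).
Proof.
elim: m t => [|m IH] t; first by rewrite addn0.
by rewrite iterS -addSnnS -(IH t.+1) -path_par.
Qed.

Lemma path_le t T : t <= T -> pk (src (x t)) = iter (T - t) (par b) (pk (src (x T))).
Proof. by move=> H; have := path_iter (T - t) t; rewrite subnKC. Qed.

Lemma path_inP n : 0 < n -> inP (src (x n)).
Proof.
move=> Hn; case: (boolP (inP (src (x n)))) => // Nm; exfalso.
have All : forall t, n <= t -> ~~ inP (src (x t)).
  elim=> [|t IH]; first by rewrite leqn0 => /eqP E; move: Hn; rewrite E.
  rewrite leq_eqVlt => /orP[/eqP E|Lt]; first by rewrite -E.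
  apply/negP => I; move/negP: (IH Lt); apply; apply: hdown' (leq_trans Hn Lt) _.
  by rewrite (Hp t).
have [m [Hm Hm0 Hw]] := often b n.
have Vw : rng (x m) \in Vo P m.+1 by rewrite in_Vo (Hp m) All // leqW.
by move/negP: (All m Hm); apply; rewrite (Hs m); apply: Hw.
Qed.

Lemma path_common : exists i, forall n, 0 < n -> src (x n) \in P n i.
Proof.
exists (pl (src (x 1))); case=> // n _; elim: n => [|n IH]; first by apply: inP_pl; apply: path_inP.
have H := inP_pl (path_inP (isT : 0 < n.+2)).
have H' : src (x n.+1) \in P n.+1 (pl (src (x n.+2))).
  by apply: hdown => //; rewrite (Hp n.+1).
by rewrite -(@hdisj n.+1 _ _ _ isT IH H') in H.
Qed.

Lemma X_char : exists i, forall n, x n = zed b i n.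
Proof.
have [i Hi] := path_common; exists i => n.
have Hf := @funnel_all i (J b n.+1) (src (x (g i (J b n.+1).+1))) (Hi _ (g_pos _ _)).
rewrite J_odd in Hf.
have Hl := path_le (ltnW (g_lt i (J b n.+1))).
rewrite Hf in Hl.
have Hl2 := path_le (ltnW (gJ b i n.+1)).
rewrite Hl -/(Zpk b i n.+1) -(zedP b i n).1 -(Hp n) in Hl2.
have Er := pk_inj Hl2.
by rewrite (Hs n) Er -(zedP b i n).2.
Qed.

End Paths.



Lemma Sp_high n (w : V B n.+1) : 2 < n -> ~~ inP w ->
  sorted (lnk (@st_ n) (@en_ n)) (ordw w).
Proof.
move=> Hn Iw; have := (ordwP w).2; rewrite /Sp (negbTE Iw).
have E0 : (n == 0) = false by case: n Hn {w Iw}.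
have E1 : (n == 1) = false by case: n Hn {w Iw E0} => [|[]].
have E2 : (n == 2) = false by case: n Hn {w Iw E0 E1} => [|[|[]]].
by rewrite E0 E1 E2; case.
Qed.

Theorem main_sec : exists lt : forall n, rel (E B n),
  is_order lt /\ strongly_ksimple P /\ ksimple_ordered P lt.
Proof.
exists ordlt; split; first exact: is_order_ordlt.
split => //; split.
- by case: hS.
- exists (zed true), (zed false); split.
  + by move=> i; split; apply: zed_ipath.
  + by move=> i n Hn; split; apply: zed_P.
  + move=> x Hx; split.
      move=> Hm; apply: (X_char Hx) => n; exact/max_sel.
    by case=> i Hi n; rewrite Hi; apply/max_sel; apply: (zedP true i n).2.
  + move=> x Hx; split.
      move=> Hm; apply: (X_char Hx) => n; exact/min_sel.
    by case=> i Hi n; rewrite Hi; apply/min_sel; apply: (zedP false i n).2.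
- exists 4; split.
  + move=> n v Hn Hn0 Hv; split.
      exists (lp v); apply: mplus_ex; rewrite /goodM Hn0.
      by rewrite (leq_trans _ Hn) ?orbT.
    exists (lm v); apply: mminus_ex; rewrite /goodm Hn0.
    by rewrite (leq_trans _ Hn) ?orbT.
  + move=> n v Hn Hn0 Hv j u0 f f' w Hd Hsf Nf Hsucc Hdm i Hpl.
    have Hj : n <= j := down_le Hd.
    have Hj4 : 4 <= j := leq_trans Hn Hj.
    have Gu : goodM u0 by rewrite /goodM (leq_trans _ Hj4) // (leq_trans _ Hj4) ?orbT.
    have [Gv Lv] := down_max Hd Hn0 Gu.
    have Ei := mplus_uniq Hpl Gv.
    have Iu : ~~ inP u0.
      apply/negP => /inP_pl Hu; have := down_P Hd Hn0 Hu.
      by move/inPI; move: Hv; rewrite in_Vo => /negP.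
    have Iy : ~~ inP (rng f).
      apply/negP => I; move/negP: Iu; apply; rewrite -Hsf.
      by apply: hdown' I; apply: leq_trans Hj4.
    have Hsort := Sp_high (leq_trans (isT : 2 < 4) Hj4) Iy.
    have El := succ_lnk Hsucc Hsort.
    have Gf' : goodm (src f') by rewrite /goodm (leq_trans _ Hj4) // (leq_trans _ Hj4) ?orbT.
    have [Gw Lw] := down_min Hdm Hn0 Gf'.
    have := mminus_ex Gw.
    by rewrite Lw /st_ in El *; rewrite -El /en_ Hsf -Lv -Ei.
  + move=> n v e f i HL Hn2 Hv Re Nmax Hsi Hsucc.
    have Hn3 : 2 < n by rewrite -ltnS.
    have Iv : ~~ inP v by rewrite -in_Vo.
    have Hsort := Sp_high Hn3 Iv.
    rewrite -Re in Hsort.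
    have El := succ_lnk Hsucc Hsort.
    have Gf : goodm (src f) by rewrite /goodm (leq_trans _ Hn3) // Hn3 orbT.
    have := mminus_ex Gf.
    suff <- : lm (src f) = i by [].
    by rewrite /st_ in El; rewrite -El /en_ /lp (inPI Hsi) (plP (ltnW (leq_trans _ Hn3)) Hsi).
Qed.

End Main.

Theorem theorem8p2 (B : bratteli) (k : nat) (P : forall n, 'I_k -> {set V B n})
    (d : 'I_k -> forall n, V B n -> int) :
  0 < k ->
  strongly_ksimple P ->
  (forall n (w : V B n.+1) (v : V B n), 0 < n -> w \in Vo P n.+1 ->
      exists e : E B n, src e = v /\ rng e = w) ->
  (forall i, phi_thread P (d i)) ->
  (forall c : 'I_k -> int,
      lim_zero P (fun n v => \sum_(i < k) c i * d i n v)%R <-> (forall i j, c i = c j)) ->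
  (forall n (v : V B n) i, 0 < n -> v \in Vo P n -> d i n v \in [:: 0; 1; -1]%R) ->
  (forall n (v : V B n), 0 < n -> v \in Vo P n ->
      #|[set i | d i n v != 0%R]| \in [:: 0; 2] /\
      forall i1 i2, i1 != i2 -> [set i | d i n v != 0%R] = [set i1; i2] ->
        (d i1 n v, d i2 n v) = (1, -1)%R \/ (d i1 n v, d i2 n v) = (-1, 1)%R) ->
  exists lt : forall n, rel (E B n),
    is_order lt /\ strongly_ksimple P /\ ksimple_ordered P lt.
Proof.
move=> hk hS hfull hthr hA hb hc.
exact: (main_sec hk hS hfull hthr hA hc).
Qed.
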